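(* Let $A=\mathrm{diag}(\lambda_1,\dots,\lambda_n)\in\mathbb{R}^{n\times n}$ with $\lambda_1<\lambda_2<\cdots<\lambda_n$, and let $v_0\in\mathbb{R}^n$ be a unit norm vector with $d(A,v_0)\geq 2$. Consider the iteration $$\widetilde v_{k+1}=(A-\rho_k I)v_k,\quad \rho_k=v_k^TAv_k,\qquad v_{k+1}=\widetilde v_{k+1}/\|\widetilde v_{k+1}\|,\qquad k=0,1,2,\dots.$$ Then the subsequence $\{v_{2k}\}$ converges (i.e. it has a single limit vector).
   Context: $d(A,v)$ denotes the grade of $v$ w.r.t. $A$, i.e. the degree of the monic polynomial $p$ of smallest degree with $p(A)v=0$; for diagonal $A$ with distinct diagonal entries this is the number of nonzero entries of $v$. $\|\cdot\|$ is the Euclidean norm. *)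

(* Defs.v *)
From HB Require Import structures.
From mathcomp Require Import all_boot all_order all_algebra.
From mathcomp Require Import all_classical all_reals all_analysis.
Set Implicit Arguments. Unset Strict Implicit. Unset Printing Implicit Defensive.
Import Order.TTheory GRing.Theory Num.Theory.
Local Open Scope ring_scope.

Definition vnorm (R : realType) (n : nat) (v : 'cV[R]_n) : R :=
  Num.sqrt (\sum_i v i 0 ^+ 2).

Definition poly_mx_app (R : realType) (n : nat) (p : {poly R}) (A : 'M[R]_n)
  (v : 'cV[R]_n) : 'cV[R]_n :=
  \sum_(i < size p) p`_i *: iter i (mulmx A) v.

(* d(A,v) >= k : no monic polynomial of degree < k annihilates v *)
Definition grade_ge (R : realType) (n : nat) (A : 'M[R]_n) (v : 'cV[R]_n)
  (k : nat) : Prop :=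
  forall p : {poly R}, p \is monic -> (size p <= k)%N -> poly_mx_app p A v != 0.

Definition rq (R : realType) (n : nat) (A : 'M[R]_n) (v : 'cV[R]_n) : R :=
  (v^T *m A *m v) 0 0.

Definition vtilde_next (R : realType) (n : nat) (A : 'M[R]_n) (v : 'cV[R]_n)
  : 'cV[R]_n := (A - (rq A v)%:M) *m v.

Definition step (R : realType) (n : nat) (A : 'M[R]_n) (v : 'cV[R]_n)
  : 'cV[R]_n := (vnorm (vtilde_next A v))^-1 *: vtilde_next A v.

Definition vseq (R : realType) (n : nat) (A : 'M[R]_n) (v0 : 'cV[R]_n)
  (k : nat) : 'cV[R]_n := iter k (step A) v0.

(* Main.v *)
Require Import Defs.
From HB Require Import structures.
From mathcomp Require Import all_boot all_order all_algebra.
From mathcomp Require Import all_classical all_reals all_analysis.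
From mathcomp Require Import ring lra.
Import Order.TTheory GRing.Theory Num.Theory numFieldNormedType.Exports.
Local Open Scope classical_set_scope.
Local Open Scope ring_scope.
Section Conv.
Variable R : realType.
Set Implicit Arguments. Unset Strict Implicit.

Definition ev (P : nat -> Prop) := exists N, forall k, (N <= k)%N -> P k.
Definition conv (u : nat -> R) (l : R) := forall e : R, 0 < e -> ev (fun k => `|u k - l| < e).

Lemma ev_and P Q : ev P -> ev Q -> ev (fun k => P k /\ Q k).
Proof.
move=> [N1 H1] [N2 H2]; exists (maxn N1 N2) => k hk; split.
- by apply: H1; apply: leq_trans hk; apply: leq_maxl.
- by apply: H2; apply: leq_trans hk; apply: leq_maxr.
Qed.

Lemma ev_imp (P Q : nat -> Prop) : (forall k, P k -> Q k) -> ev P -> ev Q.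
Proof. by move=> H [N HN]; exists N => k /HN /H. Qed.

Lemma ev_ex P : ev P -> exists k, P k.
Proof. by move=> [N HN]; exists N; apply: HN. Qed.

Lemma convP u l : conv u l <-> u @ \oo --> l.
Proof.
rewrite cvgrPdistC_lt; split.
- move=> H e he; have [N HN] := H e he; exists N => // k /= hk; exact: HN.
- move=> H e he; have [N _ HN] := H e he; exists N => k hk; exact: HN.
Qed.

Lemma conv_cst c : conv (fun _ => c) c.
Proof. by move=> e he; exists 0%N => k _; rewrite subrr normr0. Qed.

Lemma convD u v a b : conv u a -> conv v b -> conv (fun k => u k + v k) (a + b).
Proof. move=> /convP hu /convP hv; apply/convP; exact: cvgD. Qed.

Lemma convB u v a b : conv u a -> conv v b -> conv (fun k => u k - v k) (a - b).
Proof. move=> /convP hu /convP hv; apply/convP; exact: cvgB. Qed.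

Lemma convM u v a b : conv u a -> conv v b -> conv (fun k => u k * v k) (a * b).
Proof. move=> /convP hu /convP hv; apply/convP; exact: cvgM. Qed.

Lemma conv_ext u v a : conv u a -> (forall k, u k = v k) -> conv v a.
Proof. by move=> hu H e he; apply: ev_imp (hu e he) => k; rewrite H. Qed.

Lemma conv_ev_ext u v a : ev (fun k => u k = v k) -> conv u a -> conv v a.
Proof.
move=> E hu e he; apply: ev_imp (ev_and E (hu e he)) => k [-> //].
Qed.

Lemma conv_sub2 u a : conv u a -> conv (fun k => u (2 * k)%N) a.
Proof.
move=> hu e he; have [N HN] := hu e he; exists N => k hk; apply: HN.
by apply: leq_trans hk _; rewrite leq_pmull.
Qed.

Lemma conv_S u a : conv u a -> conv (fun k => u k.+1) a.
Proof.
move=> hu e he; have [N HN] := hu e he; exists N => k hk; apply: HN.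
exact: leq_trans hk _.
Qed.

Lemma conv_bndM u v B : (forall k, `|u k| <= B) -> conv v 0 -> conv (fun k => u k * v k) 0.
Proof.
move=> hB hv e he.
have hB0 : 0 <= B by apply: le_trans (hB 0%N); exact: normr_ge0.
have h1 : 0 < e / (B + 1) by apply: divr_gt0 => //; lra.
apply: ev_imp (hv _ h1) => k; rewrite !subr0 normrM => hk.
have := hB k; have := normr_ge0 (u k); have := normr_ge0 (v k).
move: hk; rewrite ltr_pdivlMr; last lra.
move=> hk h2 h3 h4; nra.
Qed.

Lemma conv_sq0 u : conv (fun k => u k ^+ 2) 0 -> conv u 0.
Proof.
move=> hu e he; apply: ev_imp (hu (e ^+ 2) (exprn_gt0 2 he)) => k.
rewrite !subr0 ger0_norm ?sqr_ge0 // => h.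
have := normr_ge0 (u k); rewrite -real_normK in h; last exact: num_real.
move=> h0; nra.
Qed.

Lemma conv_unique u a b : conv u a -> conv u b -> a = b.
Proof.
move=> /convP ha /convP hb; exact: (cvg_unique _ ha hb).
Qed.

Lemma conv_sum (I : finType) (P : pred I) (u : I -> nat -> R) (l : I -> R) :
  (forall j, P j -> conv (u j) (l j)) ->
  conv (fun k => \sum_(j | P j) u j k) (\sum_(j | P j) l j).
Proof.
move=> H.
have : forall s : seq I, conv (fun k => \sum_(j <- s | P j) u j k) (\sum_(j <- s | P j) l j).
  elim=> [|a s IH].
    by rewrite big_nil; apply: (conv_ext (conv_cst 0)) => k; rewrite big_nil.
  have -> : \sum_(j <- a :: s | P j) l j = (if P a then l a else 0) + \sum_(j <- s | P j) l j.
    by rewrite big_cons; case: (P a); rewrite ?add0r.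
  apply: (conv_ext (convD (u := fun k => if P a then u a k else 0) _ IH)).
    by case Pa: (P a); [apply: H | apply: conv_cst].
  by move=> k; rewrite big_cons; case: (P a); rewrite ?add0r.
by move=> /(_ (index_enum I)).
Qed.

Lemma sep1 (F : seq R) (x : R) : exists2 d, 0 < d & forall g, g \in F -> g != x -> d <= `|x - g|.
Proof.
elim: F => [|a F [d hd H]]; first by exists 1.
case: (eqVneq a x) => [->|hax].
  by exists d => // g; rewrite inE => /orP [/eqP ->|]; [rewrite eqxx|exact: H].
exists (Order.min d `|x - a|).
  by rewrite lt_min hd normr_gt0 subr_eq0 eq_sym.
move=> g; rewrite inE => /orP [/eqP ->|hg] hgx; first by rewrite ge_min lexx orbT.
by rewrite ge_min H.
Qed.

Lemma sep (F : seq R) : exists2 d, 0 < d & forall f g, f \in F -> g \in F -> f != g -> d <= `|f - g|.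
Proof.
elim: F => [|a F [d hd H]]; first by exists 1.
have [d1 hd1 H1] := sep1 F a.
exists (Order.min d d1); first by rewrite lt_min hd hd1.
move=> f g; rewrite !inE => /orP [/eqP ->|hf] /orP [/eqP ->|hg]; rewrite ?eqxx //.
- by move=> hag; rewrite ge_min H1 ?orbT // eq_sym.
- by move=> hfa; rewrite distrC ge_min H1 ?orbT.
- by move=> hfg; rewrite ge_min H.
Qed.

Lemma lemL (u : nat -> R) (F : seq R) :
  conv (fun k => u k.+1 - u k) 0 ->
  (forall e, 0 < e -> ev (fun k => exists2 f, f \in F & `|u k - f| < e)) ->
  exists l, conv u l.
Proof.
move=> hinc hnear.
have [d hd Hd] := sep F.
have hd3 : 0 < d / 3 by apply: divr_gt0.
have [N HN] := ev_and (hinc _ hd3) (hnear _ hd3).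
have step : forall k, (N <= k)%N -> forall f g, f \in F -> g \in F ->
   `|u k - f| < d / 3 -> `|u k.+1 - g| < d / 3 -> f = g.
  move=> k hk f g hf hg h1 h2; apply/eqP; apply/negPn/negP => hfg.
  have := Hd _ _ hf hg hfg.
  have [h3 _] := HN k hk; rewrite subr0 in h3.
  have : `|f - g| <= `|u k - f| + `|u k.+1 - u k| + `|u k.+1 - g|.
    have -> : f - g = - (u k - f) + - (u k.+1 - u k) + (u k.+1 - g) by ring.
    apply: le_trans (ler_normD _ _) _; rewrite lerD2r.
    apply: le_trans (ler_normD _ _) _; rewrite !normrN.
    done.
  lra.
have [_ [f0 hf0 H0]] := HN N (leqnn N).
have allm : forall m, `|u (N + m)%N - f0| < d / 3.
  elim=> [|m IH]; first by rewrite addn0.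
  have hk' : (N <= N + m)%N by rewrite leq_addr.
  have [_ [g hg Hg]] := HN (N + m).+1 (leq_trans hk' (leqnSn _)).
  by rewrite addnS (step _ hk' f0 g hf0 hg IH Hg).
have allk : forall k, (N <= k)%N -> `|u k - f0| < d / 3.
  by move=> k hk; rewrite -(subnKC hk); apply: allm.
exists f0 => e he.
have he' : 0 < Order.min e (d / 3) by rewrite lt_min he hd3.
have EN : ev (fun k => (N <= k)%N) by exists N.
apply: (ev_imp _ (ev_and (hnear _ he') EN)) => k [[g hg Hg] hk].
have hgf0 : g = f0.
  apply/eqP; apply/negPn/negP => hgf.
  have := Hd _ _ hg hf0 hgf.
  have := allk k hk.
  move: Hg; rewrite lt_min => /andP [_ Hg].
  have : `|g - f0| <= `|u k - g| + `|u k - f0|.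
    have -> : g - f0 = - (u k - g) + (u k - f0) by ring.
    by apply: le_trans (ler_normD _ _) _; rewrite normrN.
  lra.
by move: Hg; rewrite hgf0 lt_min => /andP [].
Qed.

End Conv.
Section Conv2.
Variable R : realType.
Set Implicit Arguments. Unset Strict Implicit.

Lemma conv_ge (u : nat -> R) (l a : R) : conv u l -> ev (fun k => a <= u k) -> a <= l.
Proof.
move=> hu ha; rewrite leNgt; apply/negP => hl.
have he : 0 < a - l by rewrite subr_gt0.
have [k [h1 h2]] := ev_ex (ev_and (hu _ he) ha).
move: h1; rewrite ltr_norml => /andP [_ h1]; lra.
Qed.

Lemma conv_squeeze (u v : nat -> R) : (forall k, 0 <= u k <= v k) -> conv v 0 -> conv u 0.
Proof.
move=> H hv e he; apply: (ev_imp _ (hv e he)) => k; rewrite !subr0.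
have /andP [h1 h2] := H k.
rewrite !ger0_norm //; [lra | lra].
Qed.

Lemma sign_pos (y : nat -> R) (w : R) N : 0 < w -> (forall k, (N <= k)%N -> 0 < y k) ->
  conv (fun k => y k ^+ 2) w -> conv y (Num.sqrt w).
Proof.
move=> hw hy hc e he.
have hs : 0 < Num.sqrt w by rewrite sqrtr_gt0.
have hss : Num.sqrt w ^+ 2 = w by rewrite sqr_sqrtr // ltW.
have EN : ev (fun k => (N <= k)%N) by exists N.
have he2 : 0 < e * Num.sqrt w by apply: mulr_gt0.
apply: (ev_imp _ (ev_and (hc _ he2) EN)) => k [h1 /hy h2].
have E : `|y k ^+ 2 - w| = `|y k - Num.sqrt w| * (y k + Num.sqrt w).
  have E1 : y k ^+ 2 - w = (y k - Num.sqrt w) * (y k + Num.sqrt w).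
    by rewrite -[in LHS]hss; ring.
  by rewrite E1 normrM (ger0_norm (x := y k + Num.sqrt w)) //; lra.
rewrite E in h1.
have := normr_ge0 (y k - Num.sqrt w); nra.
Qed.

Lemma sign_lemma (y f : nat -> R) (w : R) : (forall k, y k.+1 = f k * y k) ->
  ev (fun k => 0 < f k) -> conv (fun k => y k ^+ 2) w -> exists l, conv y l.
Proof.
move=> hy hf hc.
case: (lerP w 0) => hw.
  exists 0; apply: conv_sq0 => e he; apply: (ev_imp _ (hc e he)) => k.
  move=> h; rewrite subr0 ger0_norm ?sqr_ge0 //; move: h.
  rewrite ltr_norml => /andP [_ h]; lra.
have hw2 : 0 < w / 2 by apply: divr_gt0.
have [N HN] := ev_and hf (hc _ hw2).
have hyN : y N != 0.
  have [_ h] := HN N (leqnn N); apply/eqP => h0; move: h; rewrite h0 expr0n /= sub0r normrN.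
  rewrite ger0_norm; [lra|exact: ltW].
have gen : forall z : nat -> R, (forall k, z k.+1 = f k * z k) -> 0 < z N ->
    forall k, (N <= k)%N -> 0 < z k.
  move=> z hz hzN.
  have : forall m, 0 < z (N + m)%N.
    elim=> [|m IH]; first by rewrite addn0.
    rewrite addnS hz; apply: mulr_gt0 => //.
    by have [] := HN (N + m)%N (leq_addr _ _).
  by move=> H k hk; rewrite -(subnKC hk).
case: (ltrP 0 (y N)) => hyN2.
  exists (Num.sqrt w); apply: (sign_pos hw (gen _ hy hyN2)) => //.
have hyN3 : 0 < - y N by rewrite oppr_gt0 lt_neqAle hyN hyN2.
have hz : forall k, - y k.+1 = f k * - y k by move=> k; rewrite hy mulrN.
exists (- Num.sqrt w).
have := sign_pos hw (gen _ hz hyN3).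
have hc' : conv (fun k => (- y k) ^+ 2) w by apply: (conv_ext hc) => k; rewrite sqrrN.
move=> /(_ hc') h e he; apply: (ev_imp _ (h e he)) => k.
by rewrite -opprD normrN opprK addrC.
Qed.

End Conv2.

Section Conv3.
Variable R : realType.
Set Implicit Arguments. Unset Strict Implicit.
Lemma conv_squeeze_ev (u v : nat -> R) : ev (fun k => 0 <= u k <= v k) -> conv v 0 -> conv u 0.
Proof.
move=> H hv e he; apply: (ev_imp _ (ev_and H (hv e he))) => k; rewrite !subr0.
move=> [/andP [h1 h2] h3].
move: h3; rewrite !ger0_norm //; [lra | lra].
Qed.
End Conv3.
Section Sums.
Variable R : realType.
Set Implicit Arguments. Unset Strict Implicit.

Lemma sum_lin3 (I : finType) (F G H : I -> R) (a b c : R) :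
  \sum_i (a * F i + b * G i + c * H i) =
  a * \sum_i F i + b * \sum_i G i + c * \sum_i H i.
Proof. by rewrite !big_split /= -!mulr_sumr. Qed.

Lemma le_term (I : finType) (F : I -> R) j : (forall i, 0 <= F i) -> F j <= \sum_i F i.
Proof.
move=> H; rewrite (bigD1 j) //= lerDl; exact: sumr_ge0.
Qed.

Lemma CS (I : finType) (a b : I -> R) :
  (\sum_i a i * b i) ^+ 2 <= (\sum_i a i ^+ 2) * (\sum_i b i ^+ 2).
Proof.
set A := \sum_i a i ^+ 2; set B := \sum_i b i ^+ 2; set C := \sum_i a i * b i.
have hB : 0 <= B by apply: sumr_ge0 => i _; exact: sqr_ge0.
have key : 0 <= B * (A * B - C ^+ 2).
  have : 0 <= \sum_i (B * a i - C * b i) ^+ 2 by apply: sumr_ge0 => i _; exact: sqr_ge0.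
  rewrite (eq_bigr (fun i => B ^+ 2 * a i ^+ 2 + (- 2 * B * C) * (a i * b i) + C ^+ 2 * b i ^+ 2)); last by move=> i _; ring.
  rewrite sum_lin3 -/A -/B -/C => h.
  have -> : B * (A * B - C ^+ 2) = B ^+ 2 * A + - 2 * B * C * C + C ^+ 2 * B by ring.
  exact: h.
case: (ltrP 0 B) => hB0.
  by move: key; rewrite pmulr_rge0 // subr_ge0.
have B0 : B = 0 by apply/eqP; rewrite eq_le hB0 hB.
have C0 : C = 0.
  rewrite /C big1 // => i _.
  have : b i ^+ 2 = 0.
    apply/eqP; rewrite eq_le sqr_ge0 andbT -B0.
    exact: (@le_term I (fun j => b j ^+ 2) i (fun j => sqr_ge0 (b j))).
  by move/eqP; rewrite sqrf_eq0 => /eqP ->; rewrite mulr0.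
by rewrite C0 B0 expr0n /= mulr0.
Qed.

End Sums.
Section Dyn.
Variables (R : realType) (n : nat) (lam : 'I_n -> R) (x : nat -> 'I_n -> R) (r : nat -> R).

Definition rho k := \sum_i lam i * x k i ^+ 2.

Hypotheses (Hinj : forall i j, lam i = lam j -> i = j)
  (Hn : forall k, \sum_i x k i ^+ 2 = 1)
  (Hr : forall k, 0 < r k)
  (Hr2 : forall k, r k ^+ 2 = \sum_i (lam i - rho k) ^+ 2 * x k i ^+ 2)
  (Hx : forall k i, x k.+1 i = (lam i - rho k) * x k i / r k).

Lemma L_mean k : \sum_i (lam i - rho k) * x k i ^+ 2 = 0.
Proof.
rewrite (eq_bigr (fun i => 1 * (lam i * x k i ^+ 2) + (- rho k) * (x k i ^+ 2) + 0 * 0));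
  last by move=> i _; ring.
by rewrite sum_lin3 Hn -/(rho k); ring.
Qed.

Definition Lam := \sum_i lam i ^+ 2.

Lemma L_mom k : \sum_i lam i ^+ 2 * x k i ^+ 2 = r k ^+ 2 + rho k ^+ 2.
Proof.
rewrite Hr2.
rewrite [in RHS](eq_bigr (fun i => 1 * (lam i ^+ 2 * x k i ^+ 2) + (- 2 * rho k) * (lam i * x k i ^+ 2) + (rho k ^+ 2) * (x k i ^+ 2)));
  last by move=> i _; ring.
rewrite sum_lin3 Hn -/(rho k); ring.
Qed.

Lemma L_x1 k i : x k i ^+ 2 <= 1.
Proof. rewrite -(Hn k); exact: (@le_term _ _ (fun j => x k j ^+ 2) i (fun j => sqr_ge0 _)). Qed.

Lemma L_momle k : \sum_i lam i ^+ 2 * x k i ^+ 2 <= Lam.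
Proof.
apply: ler_sum => i _; have := L_x1 k i; have := sqr_ge0 (lam i); nra.
Qed.

Lemma Lam_ge0 : 0 <= Lam.
Proof. by apply: sumr_ge0 => i _; exact: sqr_ge0. Qed.

Lemma L_r2 k : r k ^+ 2 <= Lam.
Proof. have := L_momle k; rewrite L_mom; have := sqr_ge0 (rho k); lra. Qed.

Lemma L_rho2 k : rho k ^+ 2 <= Lam.
Proof. have := L_momle k; rewrite L_mom; have := sqr_ge0 (r k); lra. Qed.

Lemma L_rb k : `|r k| <= Lam + 1.
Proof. have := L_r2 k; have := Hr k; rewrite ger0_norm; [nra | exact: ltW]. Qed.

Lemma L_rhob k : `|rho k| <= Lam + 1.
Proof.
have := L_rho2 k; rewrite -real_normK ?num_real //; have := normr_ge0 (rho k); nra.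
Qed.

Lemma L_lamb i : `|lam i| <= Lam + 1.
Proof.
have : lam i ^+ 2 <= Lam by exact: (@le_term _ _ (fun j => lam j ^+ 2) i (fun j => sqr_ge0 _)).
rewrite -real_normK ?num_real //; have := normr_ge0 (lam i); nra.
Qed.

Lemma L_cross k : \sum_i (lam i - rho k.+1) * x k.+1 i * x k i = r k.
Proof.
have hr := Hr k.
rewrite (eq_bigr (fun i => (r k)^-1 * ((lam i - rho k) ^+ 2 * x k i ^+ 2) + ((rho k - rho k.+1) / r k) * ((lam i - rho k) * x k i ^+ 2) + 0 * 0));
  last by move=> i _; rewrite Hx; field; rewrite gt_eqF.
rewrite sum_lin3 -Hr2 L_mean; field; rewrite gt_eqF //.
Qed.

Lemma L_mono k : r k <= r k.+1.
Proof.
have h : 0 <= \sum_i ((lam i - rho k.+1) * x k.+1 i - r k.+1 * x k i) ^+ 2.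
  by apply: sumr_ge0 => i _; exact: sqr_ge0.
rewrite (eq_bigr (fun i => 1 * ((lam i - rho k.+1) ^+ 2 * x k.+1 i ^+ 2) + (- 2 * r k.+1) * ((lam i - rho k.+1) * x k.+1 i * x k i) + (r k.+1 ^+ 2) * (x k i ^+ 2))) in h;
  last by move=> i _; ring.
rewrite sum_lin3 -Hr2 L_cross Hn in h.
have := Hr k.+1; nra.
Qed.

Lemma L_c k : \sum_i x k.+2 i * x k i = r k / r k.+1.
Proof.
have hr := Hr k.+1.
rewrite (eq_bigr (fun i => (r k.+1)^-1 * ((lam i - rho k.+1) * x k.+1 i * x k i) + 0 * 0 + 0 * 0));
  last by move=> i _; rewrite Hx; field; rewrite gt_eqF.
by rewrite sum_lin3 L_cross; field; rewrite gt_eqF.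
Qed.

Definition E k := \sum_i (x k.+2 i - x k i) ^+ 2.

Lemma L_E k : E k = 2 - 2 * (r k / r k.+1).
Proof.
rewrite /E (eq_bigr (fun i => 1 * (x k.+2 i ^+ 2) + (- 2) * (x k.+2 i * x k i) + 1 * (x k i ^+ 2)));
  last by move=> i _; ring.
by rewrite sum_lin3 !Hn L_c; ring.
Qed.

Definition rs := sup (range r).

Lemma L_rconv : conv r rs.
Proof.
apply/convP; apply: nondecreasing_cvgn.
  by apply/nondecreasing_seqP => k; exact: L_mono.
exists (Lam + 1) => _ [k _ <-]; have := L_rb k; rewrite ger0_norm //; exact: ltW (Hr k).
Qed.

Lemma L_rmono k m : (k <= m)%N -> r k <= r m.
Proof.
move=> hkm; rewrite -(subnKC hkm); elim: (m - k)%N => [|j IH]; first by rewrite addn0.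
by apply: le_trans IH _; rewrite addnS; exact: L_mono.
Qed.

Lemma L_r0 k : r 0 <= r k.
Proof. exact: L_rmono. Qed.

Lemma L_rs0 : r 0 <= rs.
Proof. apply: (conv_ge L_rconv); exists 0%N => k _; exact: L_r0. Qed.

Lemma L_rs_pos : 0 < rs.
Proof. exact: lt_le_trans (Hr 0) L_rs0. Qed.

Lemma L_rinc : conv (fun k => r k.+1 - r k) 0.
Proof.
by have := convB (conv_S L_rconv) L_rconv; rewrite subrr.
Qed.

Lemma L_Econv : conv E 0.
Proof.
have : conv (fun k => 2 / r k.+1 * (r k.+1 - r k)) 0.
  apply: (@conv_bndM _ _ _ (2 / r 0)) L_rinc => k.
  have h0 := Hr 0; have h1 := L_r0 k.+1.
  rewrite ger0_norm; last by apply: divr_ge0 => //; exact: ltW (Hr _).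
  rewrite ler_pdivrMr ?Hr // mulrAC ler_pdivlMr //; nra.
move=> h; apply: (conv_ext h) => k; rewrite L_E; field; rewrite gt_eqF //.
Qed.
Definition hh k i := (lam i - rho k) * (lam i - rho k.+1) - r k * r k.+1.
Definition HH k := \sum_i hh k i ^+ 2 * x k i ^+ 2.

Lemma L_x2 k i : x k.+2 i = (1 + hh k i / (r k * r k.+1)) * x k i.
Proof.
have h0 := Hr k; have h1 := Hr k.+1.
rewrite !Hx /hh; field; rewrite ?gt_eqF //.
Qed.

Lemma L_HH k : HH k = (r k * r k.+1) ^+ 2 * E k.
Proof.
have h0 := Hr k; have h1 := Hr k.+1.
rewrite /HH /E mulr_sumr; apply: eq_bigr => i _; rewrite L_x2.
field; rewrite ?gt_eqF //.
Qed.

Lemma L_HHconv : conv HH 0.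
Proof.
have := @conv_bndM _ (fun k => (r k * r k.+1) ^+ 2) E (Lam ^+ 2) _ L_Econv.
move=> h; apply: (conv_ext (h _)) => [k|k]; last by rewrite L_HH.
have := L_r2 k; have := L_r2 k.+1; have := Hr k; have := Hr k.+1.
rewrite ger0_norm ?sqr_ge0 // exprMn; move=> *; nra.
Qed.

Lemma L_HH_ge0 k : 0 <= HH k.
Proof. by apply: sumr_ge0 => i _; apply: mulr_ge0; exact: sqr_ge0. Qed.

Lemma L_drho k : (rho k.+2 - rho k) ^+ 2 <= E k * (4 * Lam).
Proof.
have -> : rho k.+2 - rho k = \sum_i (x k.+2 i - x k i) * (lam i * (x k.+2 i + x k i)).
  rewrite /rho -sumrB; apply: eq_bigr => i _; ring.
apply: le_trans (CS _ _) _; rewrite -/(E k).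
apply: ler_wpM2l; first by apply: sumr_ge0 => i _; exact: sqr_ge0.
rewrite /Lam mulr_sumr; apply: ler_sum => i _.
have := L_x1 k i; have := L_x1 k.+2 i; have := sqr_ge0 (lam i).
have := sqr_ge0 (x k.+2 i - x k i).
rewrite exprMn; move=> *; nra.
Qed.

Lemma L_rhoinc : conv (fun k => rho k.+2 - rho k) 0.
Proof.
apply: conv_sq0; apply: (@conv_squeeze _ _ (fun k => 4 * Lam * E k)).
  move=> k; rewrite sqr_ge0 /=; have := L_drho k; lra.
have := @conv_bndM _ (fun _ => 4 * Lam) E (4 * Lam) _ L_Econv.
by apply => k; rewrite ger0_norm //; have := Lam_ge0; lra.
Qed.

Definition Cl := \sum_i \sum_j (lam i - lam j) ^+ 2.

Lemma L_Cl i j : (lam i - lam j) ^+ 2 <= Cl.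
Proof.
have h1 := (@le_term _ _ (fun j => (lam i - lam j) ^+ 2) j (fun _ => sqr_ge0 _)).
have h2 := (@le_term _ _ (fun i => \sum_j (lam i - lam j) ^+ 2) i (fun i' => sumr_ge0 _ (fun j' _ => sqr_ge0 _))).
exact: (le_trans h1 h2).
Qed.

Lemma L_var k c : \sum_i (lam i - c) ^+ 2 * x k i ^+ 2 = r k ^+ 2 + (rho k - c) ^+ 2.
Proof.
rewrite (eq_bigr (fun i => 1 * ((lam i - rho k) ^+ 2 * x k i ^+ 2) + (2 * (rho k - c)) * ((lam i - rho k) * x k i ^+ 2) + ((rho k - c) ^+ 2) * (x k i ^+ 2)));
  last by move=> i _; ring.
by rewrite sum_lin3 -Hr2 L_mean Hn; ring.
Qed.

Lemma L_good e : 0 < e -> ev (fun k => exists a b, a != b /\ `|hh k a| < e /\ `|hh k b| < e).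
Proof.
move=> he.
have hCl : 0 <= Cl by apply: sumr_ge0 => i _; apply: sumr_ge0 => j _; exact: sqr_ge0.
have he2 : 0 < e ^+ 2 by exact: exprn_gt0.
have hr0 := Hr 0.
set t := r 0 ^+ 2 * e ^+ 2 / (Cl + 1).
have ht : 0 < t by rewrite /t; apply: divr_gt0; [apply: mulr_gt0 => //; exact: exprn_gt0 | lra].
apply: (ev_imp _ (L_HHconv ht)) => k hk.
rewrite subr0 ger0_norm ?L_HH_ge0 // in hk.
have key : forall a, (forall i, i != a -> e <= `|hh k i|) -> False.
  move=> a Ha.
  have h1 : r 0 ^+ 2 <= r k ^+ 2.
    have := L_r0 k; have := Hr k; nra.
  have h2 : r k ^+ 2 <= \sum_i (lam i - lam a) ^+ 2 * x k i ^+ 2.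
    by rewrite L_var; have := sqr_ge0 (rho k - lam a); lra.
  have h3 : \sum_i (lam i - lam a) ^+ 2 * x k i ^+ 2 <= \sum_i (Cl / e ^+ 2) * (hh k i ^+ 2 * x k i ^+ 2).
    apply: ler_sum => i _; case: (eqVneq i a) => [->|hia].
      rewrite subrr expr0n /= mul0r; apply: mulr_ge0; first by apply: divr_ge0; [|exact: ltW].
      by apply: mulr_ge0; exact: sqr_ge0.
    have hi := Ha i hia.
    have hh2 : e ^+ 2 <= hh k i ^+ 2.
      rewrite -[hh k i ^+ 2]real_normK ?num_real //; have := ltW he; nra.
    have q : 1 <= hh k i ^+ 2 / e ^+ 2 by rewrite ler_pdivlMr // mul1r.
    have q2 : Cl <= Cl / e ^+ 2 * hh k i ^+ 2.
      have -> : Cl / e ^+ 2 * hh k i ^+ 2 = Cl * (hh k i ^+ 2 / e ^+ 2) by ring.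
      nra.
    have := L_Cl i a; have := sqr_ge0 (x k i); nra.
  rewrite -mulr_sumr -/(HH k) in h3.
  have h4 : Cl / e ^+ 2 * HH k <= Cl / e ^+ 2 * t.
    by apply: ler_wpM2l; [apply: divr_ge0; [|exact: ltW] | exact: ltW].
  have h5 : Cl / e ^+ 2 * t = r 0 ^+ 2 * (Cl / (Cl + 1)).
    by rewrite /t; field; rewrite ?gt_eqF //; lra.
  have h6 : Cl / (Cl + 1) < 1 by rewrite ltr_pdivrMr; lra.
  have h7 : 0 < r 0 ^+ 2 by exact: exprn_gt0.
  have h8 : r 0 ^+ 2 * (Cl / (Cl + 1)) < r 0 ^+ 2 by rewrite gtr_pMr.
  lra.
case: (pselect (exists a b, a != b /\ `|hh k a| < e /\ `|hh k b| < e)) => // hno; exfalso.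
case: (pselect (exists a, `|hh k a| < e)) => [[a ha]|hnone].
  apply: (key a) => i hia; rewrite leNgt; apply/negP => hi; apply: hno.
  by exists a, i; rewrite eq_sym hia.
have [a _] : exists a : 'I_n, True.
  case: (pselect (exists a : 'I_n, True)) => // hN.
  have := Hn k; rewrite big1 => [|i _]; last by exfalso; apply: hN; exists i.
  by move/eqP; rewrite eq_sym oner_eq0.
apply: (key a) => i _; rewrite leNgt; apply/negP => hi; apply: hnone; by exists i.
Qed.
Lemma L_dl : exists2 dl, 0 < dl & forall a b, a != b -> dl <= `|lam a - lam b|.
Proof.
have [d hd H] := sep [seq lam i | i <- index_enum 'I_n].
exists d => // a b hab; apply: H; rewrite ?map_f ?mem_index_enum //.
by apply/negP => /eqP /Hinj /eqP; apply/negP.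
Qed.

Definition sK k := rho k + rho k.+1.
Definition pK k := rho k * rho k.+1 - r k * r k.+1.

Lemma L_hhsp k a : hh k a = lam a ^+ 2 - sK k * lam a + pK k.
Proof. rewrite /hh /sK /pK; ring. Qed.

Lemma L_sconv : exists sS, conv sK sS.
Proof.
have [dl hdl Hdl] := L_dl.
apply: (@lemL _ _ [seq lam a + lam b | a <- index_enum 'I_n, b <- index_enum 'I_n]).
  apply: (conv_ext L_rhoinc) => k; rewrite /sK; ring.
move=> e he.
have he' : 0 < e * dl / 2 by apply: divr_gt0 => //; apply: mulr_gt0.
apply: (ev_imp _ (L_good he')) => k [a [b [hab [ha hb]]]].
exists (lam a + lam b); first by apply: allpairs_f; exact: mem_index_enum.
have E1 : (lam a - lam b) * (lam a + lam b - sK k) = hh k a - hh k b by rewrite !L_hhsp; ring.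
have h1 : `|lam a - lam b| * `|lam a + lam b - sK k| < e * dl.
  rewrite -normrM E1; apply: le_lt_trans (ler_normB _ _) _; lra.
rewrite distrC.
have := Hdl a b hab; have := normr_ge0 (lam a + lam b - sK k).
move=> h2 h3; nra.
Qed.

Lemma L_pinc : conv (fun k => pK k.+1 - pK k) 0.
Proof.
have h1 := @conv_bndM _ (fun k => rho k.+1) _ (Lam + 1) (fun k => L_rhob k.+1) L_rhoinc.
have h2' := convB (conv_S (conv_S L_rconv)) L_rconv; rewrite subrr in h2'.
have h2 := @conv_bndM _ (fun k => r k.+1) _ (Lam + 1) (fun k => L_rb k.+1) h2'.
have := convB h1 h2; rewrite subrr.
move=> h; apply: (conv_ext h) => k; rewrite /pK; ring.
Qed.

Lemma L_pconv : exists pS, conv pK pS.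
Proof.
have [dl hdl Hdl] := L_dl.
apply: (@lemL _ _ [seq lam a * lam b | a <- index_enum 'I_n, b <- index_enum 'I_n]).
  exact: L_pinc.
move=> e he.
have hM : 0 < Lam + 1 by have := Lam_ge0; lra.
have he' : 0 < e * dl / (2 * (Lam + 1)) by apply: divr_gt0; apply: mulr_gt0 => //; lra.
apply: (ev_imp _ (L_good he')) => k [a [b [hab [ha hb]]]].
exists (lam a * lam b); first by apply: allpairs_f; exact: mem_index_enum.
have E1 : (lam b - lam a) * (pK k - lam a * lam b) = lam b * hh k a - lam a * hh k b
  by rewrite !L_hhsp; ring.
have h0 : `|lam b * hh k a - lam a * hh k b| <= (Lam + 1) * `|hh k a| + (Lam + 1) * `|hh k b|.
  apply: le_trans (ler_normB _ _) _; rewrite !normrM.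
  apply: lerD; apply: ler_wpM2r => //; exact: L_lamb.
have h5 : (Lam + 1) * `|hh k a| + (Lam + 1) * `|hh k b| < e * dl.
  have -> : e * dl = (Lam + 1) * (e * dl / (2 * (Lam + 1))) * 2 by field; lra.
  have := normr_ge0 (hh k a); have := normr_ge0 (hh k b); nra.
have h1 : `|lam b - lam a| * `|pK k - lam a * lam b| < e * dl.
  by rewrite -normrM E1; lra.
have := normr_ge0 (pK k - lam a * lam b).
have := Hdl a b hab; rewrite distrC => h2 h3; nra.
Qed.
Lemma L_rhoe : exists sS re, conv sK sS /\ conv (fun k => rho (2 * k)%N) re.
Proof.
have [sS hs] := L_sconv; have [pS hp] := L_pconv.
exists sS.
set q := pS + rs ^+ 2.
have hQ : conv (fun k => rho k ^+ 2 - sS * rho k + q) 0.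
  have hs0 : conv (fun k => sK k - sS) 0 by have := convB hs (conv_cst sS); rewrite subrr.
  have h1 := @conv_bndM _ rho _ (Lam + 1) L_rhob hs0.
  have h2 : conv (fun k => pK k - pS) 0 by have := convB hp (conv_cst pS); rewrite subrr.
  have h3 : conv (fun k => r k * r k.+1 - rs ^+ 2) 0.
    by have := convB (convM L_rconv (conv_S L_rconv)) (conv_cst (rs ^+ 2)); rewrite -expr2 subrr.
  have := convB (convB h1 h2) h3; rewrite !subr0.
  move=> h; apply: (conv_ext h) => k; rewrite /q /sK /pK; ring.
set D := sS ^+ 2 - 4 * q.
case: (ltrP D 0) => hD.
  have hD4 : 0 < - D / 4 by apply: divr_gt0; lra.
  have [k hk] := ev_ex (hQ _ hD4).
  exfalso; move: hk; rewrite subr0.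
  have -> : rho k ^+ 2 - sS * rho k + q = (rho k - sS / 2) ^+ 2 + - D / 4 by rewrite /D; field.
  rewrite ger0_norm; last by apply: addr_ge0; [exact: sqr_ge0 | exact: ltW].
  have := sqr_ge0 (rho k - sS / 2); lra.

set sd := Num.sqrt D.
have hsd : sd ^+ 2 = D by rewrite sqr_sqrtr.
have hQf : forall k, rho k ^+ 2 - sS * rho k + q = (rho k - (sS - sd) / 2) * (rho k - (sS + sd) / 2).
  have Eq : q = (sS ^+ 2 - sd ^+ 2) / 4 by rewrite hsd /D; field.
  by move=> k; rewrite Eq; field.
have [re hre] : exists re, conv (fun k => rho (2 * k)%N) re.
  apply: (@lemL _ _ [:: (sS - sd) / 2; (sS + sd) / 2]).
    apply: (conv_ext (conv_sub2 L_rhoinc)) => m /=.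
    by rewrite mulnS.
  move=> e he.
  apply: (ev_imp _ (conv_sub2 hQ (exprn_gt0 2 he))) => m.
  rewrite subr0 hQf normrM => hk.
  case: (ltrP `|rho (2 * m)%N - (sS - sd) / 2| e) => h1.
    by exists ((sS - sd) / 2); rewrite ?inE ?eqxx.
  exists ((sS + sd) / 2); first by rewrite !inE eqxx orbT.
  rewrite ltNge; apply/negP => h2.
  have := normr_ge0 (rho (2 * m)%N - (sS + sd) / 2); have := ltW he; nra.
by exists re; split.
Qed.
Lemma L_final i : exists l, conv (fun k => x (2 * k)%N i) l.
Proof.
have [sS [re [hs hre]]] := L_rhoe.
set ro := sS - re.
have hro : conv (fun k => rho (2 * k)%N.+1) ro.
  have := convB (conv_sub2 hs) hre.
  by move=> h; apply: (conv_ext h) => m; rewrite /sK; ring.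
pose hS j := (lam j - re) * (lam j - ro) - rs ^+ 2.
have hg : forall j, conv (fun k => hh (2 * k)%N j) (hS j).
  move=> j.
  have h1 := convM (convB (conv_cst (lam j)) hre) (convB (conv_cst (lam j)) hro).
  have h2 := conv_sub2 (convM L_rconv (conv_S L_rconv)).
  have := convB h1 h2; rewrite -expr2.
  by move=> h; apply: (conv_ext h) => m.
have hH2 := conv_sub2 L_HHconv.
have w0 : forall j, hS j != 0 -> conv (fun k => x (2 * k)%N j ^+ 2) 0.
  move=> j hj.
  have hj2 : 0 < `|hS j| / 2 by apply: divr_gt0 => //; rewrite normr_gt0.
  have hj3 : 0 < hS j ^+ 2 by rewrite lt_neqAle sqr_ge0 andbT eq_sym sqrf_eq0.
  apply: (@conv_squeeze_ev _ _ (fun k => 4 / hS j ^+ 2 * HH (2 * k)%N)).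
    apply: (ev_imp _ (hg j _ hj2)) => k hk; rewrite distrC in hk.
    rewrite sqr_ge0 /=.
    have h1 : hh (2 * k)%N j ^+ 2 * x (2 * k)%N j ^+ 2 <= HH (2 * k)%N.
      exact: (@le_term _ _ (fun j' => hh (2 * k)%N j' ^+ 2 * x (2 * k)%N j' ^+ 2) j
         (fun j' => mulr_ge0 (sqr_ge0 _) (sqr_ge0 _))).
    have h2 : hS j ^+ 2 / 4 <= hh (2 * k)%N j ^+ 2.
      rewrite -[hh _ j ^+ 2]real_normK ?num_real // -[hS j ^+ 2]real_normK ?num_real //.
      have : `|hS j| <= `|hh (2 * k)%N j| + `|hS j - hh (2 * k)%N j|.
        by have := ler_normD (hh (2 * k)%N j) (hS j - hh (2 * k)%N j); rewrite addrC subrK.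
      have := normr_ge0 (hS j); have := normr_ge0 (hh (2 * k)%N j); nra.
    have hj4 : 0 < hS j ^+ 2 / 4 by apply: divr_gt0.
    have -> : 4 / hS j ^+ 2 * HH (2 * k)%N = HH (2 * k)%N / (hS j ^+ 2 / 4).
      by field; rewrite ?hj // gt_eqF.
    rewrite ler_pdivlMr //.
    have := sqr_ge0 (x (2 * k)%N j); nra.
  have := @conv_bndM _ (fun _ => 4 / hS j ^+ 2) _ (4 / hS j ^+ 2) _ hH2.
  apply => k; rewrite ger0_norm //; apply: divr_ge0 => //; exact: ltW.
have three : forall a b c, hS a = 0 -> hS b = 0 -> hS c = 0 -> a != b -> a != c -> b = c.
  move=> a b c ha hb hc hab hac.
  have key : forall u v, hS u = 0 -> hS v = 0 -> u != v -> lam u + lam v = re + ro.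
    move=> u v hu hv huv.
    have E1 : (lam u - lam v) * (lam u + lam v - (re + ro)) = hS u - hS v by rewrite /hS; ring.
    rewrite hu hv subrr in E1; move/eqP: E1; rewrite mulf_eq0 subr_eq0 => /orP [/eqP /Hinj huv'|].
      by move: huv; rewrite huv' eqxx.
    by rewrite subr_eq0 => /eqP.
  have h1 := key _ _ ha hb hab; have h2 := key _ _ ha hc hac.
  by apply: Hinj; lra.
case: (eqVneq (hS i) 0) => hi; last by exists 0; apply: conv_sq0; apply: w0.
have [om hom] : exists om, conv (fun k => x (2 * k)%N i ^+ 2) om.
  case: (pselect (exists b, b != i /\ hS b = 0)) => [[b [hbi hb]]|hno].
    have oth : forall j, (j != i) && (j != b) -> conv (fun k => x (2 * k)%N j ^+ 2) 0.
      move=> j /andP [hji hjb]; apply: w0; apply/eqP => hj.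
      by move: hjb; rewrite -(three _ _ _ hi hb hj) ?eqxx // eq_sym.
    have hS1 := conv_sum oth.
    have hS2 := conv_sum (fun j hj => convM (conv_cst (lam j)) (oth j hj)).
    rewrite big1 in hS1; last by [].
    rewrite big1 in hS2; last by move=> j _; rewrite mulr0.
    have hlab : lam i - lam b != 0.
      by rewrite subr_eq0; apply/eqP => /Hinj hh'; move: hbi; rewrite hh' eqxx.
    exists ((re - 0 - lam b * (1 - 0)) / (lam i - lam b)).
    have := convM (convB (convB hre hS2) (convM (conv_cst (lam b)) (convB (conv_cst 1) hS1))) (conv_cst (lam i - lam b)^-1).
    move=> h; apply: (conv_ext h) => k.
    have E1 := Hn (2 * k)%N.
    have E2 : rho (2 * k)%N = \sum_j lam j * x (2 * k)%N j ^+ 2 by [].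
    rewrite (bigD1 i) //= (bigD1 b) //= in E1.
    rewrite (bigD1 i) //= (bigD1 b) //= in E2.
    by rewrite E2 -E1; field; exact: hlab.
  exists (1 - 0).
  have oth : forall j, j != i -> conv (fun k => x (2 * k)%N j ^+ 2) 0.
    move=> j hji; apply: w0; apply/eqP => hj; apply: hno; by exists j.
  have hS1 := conv_sum oth.
  rewrite big1 in hS1; last by [].
  have := convB (conv_cst 1) hS1.
  move=> h; apply: (conv_ext h) => k.
  have E1 := Hn (2 * k)%N.
  rewrite (bigD1 i) //= in E1.
  by rewrite -E1 addrK.
have hr0 := Hr 0.
apply: (@sign_lemma _ _ (fun k => 1 + hh (2 * k)%N i / (r (2 * k)%N * r (2 * k)%N.+1)) om) => //.
  by move=> k /=; rewrite mulnS; exact: L_x2.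
have h := hg i (r 0 ^+ 2) (exprn_gt0 2 hr0).
apply: (ev_imp _ h) => k hk.
rewrite hi subr0 ltr_norml in hk; move/andP: hk => [hk1 hk2].
have hrr : r 0 ^+ 2 <= r (2 * k)%N * r (2 * k)%N.+1.
  have := L_r0 (2 * k)%N; have := L_r0 (2 * k)%N.+1; nra.
have hp : 0 < r (2 * k)%N * r (2 * k)%N.+1 by apply: mulr_gt0; exact: Hr.
have -> : 1 + hh (2 * k)%N i / (r (2 * k)%N * r (2 * k)%N.+1) =
   (r (2 * k)%N * r (2 * k)%N.+1 + hh (2 * k)%N i) / (r (2 * k)%N * r (2 * k)%N.+1).
  by field; rewrite !gt_eqF ?Hr.
apply: divr_gt0 => //; lra.
Qed.
End Dyn.
Section Conc.
Variables (R : realType) (n : nat).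

Lemma two_nz (lamf : 'I_n -> R) (v : 'I_n -> R) :
  (forall i j, lamf i = lamf j -> i = j) -> \sum_i v i ^+ 2 = 1 ->
  (exists i j, i != j /\ v i != 0 /\ v j != 0) ->
  exists i j, i != j /\ (lamf i - \sum_l lamf l * v l ^+ 2) * v i != 0 /\
                        (lamf j - \sum_l lamf l * v l ^+ 2) * v j != 0.
Proof.
move=> Hinj Hn [i [j [hij [hi hj]]]].
set rh := \sum_l lamf l * v l ^+ 2.
have Hm : \sum_l ((lamf l - rh) * v l) * v l = 0.
  rewrite (eq_bigr (fun l => 1 * (lamf l * v l ^+ 2) + (- rh) * (v l ^+ 2) + 0 * 0));
    last by move=> l _; ring.
  by rewrite sum_lin3 Hn -/rh; ring.
case: (pselect (exists i', (lamf i' - rh) * v i' != 0)) => [[i' hi']|hno].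
  case: (pselect (exists j', j' != i' /\ (lamf j' - rh) * v j' != 0)) => [[j' [hj' hj'2]]|hno2].
    by exists i', j'; rewrite eq_sym hj'.
  exfalso; move: Hm; rewrite (bigD1 i') //= big1 => [|l hl]; last first.
    case: (eqVneq ((lamf l - rh) * v l) 0) => [->|hl2]; first by rewrite mul0r.
    by exfalso; apply: hno2; exists l.
  rewrite addr0 => /eqP; rewrite mulf_eq0 (negbTE hi') /=.
  by move: hi'; rewrite mulf_eq0 negb_or => /andP [_ /negbTE ->].
exfalso.
have z : forall l, (lamf l - rh) * v l = 0.
  by move=> l; case: (eqVneq ((lamf l - rh) * v l) 0) => // hl; exfalso; apply: hno; exists l.
have := z i; have := z j; move/eqP; rewrite mulf_eq0 (negbTE hj) orbF subr_eq0 => /eqP e1.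
move/eqP; rewrite mulf_eq0 (negbTE hi) orbF subr_eq0 => /eqP e2.
have : i = j by apply: Hinj; rewrite e1 e2.
by move/eqP; rewrite (negbTE hij).
Qed.

Variable lam : 'rV[R]_n.

Lemma rq_diag v : rq (diag_mx lam) v = \sum_i lam 0 i * v i 0 ^+ 2.
Proof.
rewrite /rq mxE; apply: eq_bigr => i _; rewrite mul_mx_diag !mxE; ring.
Qed.

Lemma vt_diag v i : vtilde_next (diag_mx lam) v i 0 = (lam 0 i - rq (diag_mx lam) v) * v i 0.
Proof. rewrite /vtilde_next mulmxBl mul_scalar_mx mul_diag_mx !mxE; ring. Qed.

Lemma step_diag v i : step (diag_mx lam) v i 0 =
  (vnorm (vtilde_next (diag_mx lam) v))^-1 * vtilde_next (diag_mx lam) v i 0.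
Proof. by rewrite /step mxE. Qed.

Lemma vnorm2 (v : 'cV[R]_n) : vnorm v ^+ 2 = \sum_i v i 0 ^+ 2.
Proof. by rewrite sqr_sqrtr //; apply: sumr_ge0 => i _; exact: sqr_ge0. Qed.

Lemma vnorm_pos (v : 'cV[R]_n) i : v i 0 != 0 -> 0 < vnorm v.
Proof.
move=> hi; rewrite /vnorm sqrtr_gt0.
apply: lt_le_trans (@le_term _ _ (fun j => v j 0 ^+ 2) i (fun _ => sqr_ge0 _)).
by rewrite lt_neqAle sqr_ge0 andbT eq_sym sqrf_eq0.
Qed.

Lemma pma_entry (v : 'cV[R]_n) c m :
  poly_mx_app ('X - c%:P) (diag_mx lam) v m 0 = (lam 0 m - c) * v m 0.
Proof.
rewrite /poly_mx_app size_XsubC big_ord_recr big_ord_recr big_ord0 /=.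
rewrite add0r mul_diag_mx !mxE !coefB !coefX !coefC /=; ring.
Qed.

End Conc.
Theorem theorem4p3 (R : realType) (n : nat) (lam : 'rV[R]_n) (v0 : 'cV[R]_n)
  (hlam : forall i j : 'I_n, (i < j)%N -> lam 0 i < lam 0 j)
  (hunit : vnorm v0 = 1)
  (hgrade : grade_ge (diag_mx lam) v0 2) :
  (forall k, vtilde_next (diag_mx lam) (vseq (diag_mx lam) v0 k) != 0) /\
  exists L : 'cV[R]_n, forall i : 'I_n,
    (fun k : nat => vseq (diag_mx lam) v0 (2 * k)%N i 0) @ \oo --> L i 0.
Proof.
pose lamf (i : 'I_n) := lam 0 i.
pose x k i := vseq (diag_mx lam) v0 k i 0.
pose r k := vnorm (vtilde_next (diag_mx lam) (vseq (diag_mx lam) v0 k)).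
have Hinj : forall i j, lamf i = lamf j -> i = j.
  move=> i j e; rewrite /lamf in e; apply/eqP; case: (ltngtP i j) => h.
    by exfalso; have := hlam _ _ h; rewrite e ltxx.
    by exfalso; have := hlam _ _ h; rewrite e ltxx.
  by apply/eqP; apply: val_inj.
have Erq : forall k, rq (diag_mx lam) (vseq (diag_mx lam) v0 k) = rho lamf x k.
  by move=> k; rewrite rq_diag.
have Ht : forall k i, vtilde_next (diag_mx lam) (vseq (diag_mx lam) v0 k) i 0
    = (lamf i - rho lamf x k) * x k i.
  by move=> kk ii; rewrite vt_diag Erq.
have Hx : forall k i, x k.+1 i = (lamf i - rho lamf x k) * x k i / r k.
  move=> kk ii.
  have -> : x kk.+1 ii = step (diag_mx lam) (vseq (diag_mx lam) v0 kk) ii 0 by [].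
  by rewrite step_diag -/(r kk) Ht mulrC.
pose Inv k := \sum_i x k i ^+ 2 = 1 /\ exists i j, i != j /\ x k i != 0 /\ x k j != 0.
have Inv0 : Inv 0%N.
  have hs : \sum_i1 x 0%N i1 ^+ 2 = 1 by rewrite -(vnorm2 v0) hunit expr1n.
  split => //.
  have [i1 hi1] : exists i1, x 0%N i1 != 0.
    case: (pselect (exists i1, x 0%N i1 != 0)) => // hno; exfalso.
    move: hs; rewrite big1 => [|i1 _]; first by move/eqP; rewrite eq_sym oner_eq0.
    case: (eqVneq (x 0%N i1) 0) => [->|hi1]; first by rewrite expr0n.
    by exfalso; apply: hno; exists i1.
  have hp := hgrade ('X - (lamf i1)%:P) (monicXsubC _) (eq_leq (size_XsubC _)).
  have [m1 hm] : exists m1, poly_mx_app ('X - (lamf i1)%:P) (diag_mx lam) v0 m1 0 != 0.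
    case: (pselect (exists m1, poly_mx_app ('X - (lamf i1)%:P) (diag_mx lam) v0 m1 0 != 0)) => // hno.
    exfalso; move/negP: hp; apply; apply/eqP/matrixP => m1 l1; rewrite (ord1 l1) mxE.
    by case: (eqVneq (poly_mx_app ('X - (lamf i1)%:P) (diag_mx lam) v0 m1 0) 0) => // hz; exfalso; apply: hno; exists m1.
  move: hm; rewrite pma_entry mulf_eq0 negb_or => /andP [h1 h2].
  exists m1, i1; split; last by split.
  by apply/eqP => e5; move: h1; rewrite e5 subrr eqxx.
have InvS : forall k1, Inv k1 -> Inv k1.+1 /\ 0 < r k1.
  move=> k1 [Hn H2].
  have [i1 [j1 [hij [hi1 hj1]]]] := two_nz Hinj Hn H2.
  have hr : 0 < r k1 by apply: (@vnorm_pos _ _ _ i1); rewrite Ht.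
  have hr2 : r k1 ^+ 2 = \sum_l1 ((lamf l1 - rho lamf x k1) * x k1 l1) ^+ 2.
    by rewrite /r vnorm2; apply: eq_bigr => l1 _; rewrite Ht.
  split => //; split.
    rewrite (eq_bigr (fun l1 => (r k1 ^+ 2)^-1 * ((lamf l1 - rho lamf x k1) * x k1 l1) ^+ 2)).
      by rewrite -mulr_sumr -hr2 mulVf // gt_eqF // exprn_gt0.
    by move=> l1 _; rewrite Hx; field; rewrite gt_eqF.
  exists i1, j1; split => //; rewrite !Hx; split; apply: mulf_neq0 => //; rewrite invr_neq0 // gt_eqF //.
have Inv_all : forall k1, Inv k1 by elim=> [|k1 IH] //; case: (InvS k1 IH).
have Hn : forall k1, \sum_i1 x k1 i1 ^+ 2 = 1 by move=> k1; case: (Inv_all k1).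
have Hr : forall k1, 0 < r k1 by move=> k1; case: (InvS k1 (Inv_all k1)).
have Hr2 : forall k1, r k1 ^+ 2 = \sum_i1 (lamf i1 - rho lamf x k1) ^+ 2 * x k1 i1 ^+ 2.
  by move=> k1; rewrite /r vnorm2; apply: eq_bigr => l1 _; rewrite Ht exprMn.
split.
  move=> k1; have [_ H2] := Inv_all k1.
  have [i1 [j1 [hij [hi1 hj1]]]] := two_nz Hinj (Hn k1) H2.
  apply/eqP => h0; move: hi1; rewrite -/(rho lamf x k1) -Ht h0 mxE eqxx //.
have F := L_final Hinj Hn Hr Hr2 Hx.
exists (\col_i1 proj1_sig (boolp.cid (F i1))) => i1; rewrite mxE; apply/convP.
exact: (proj2_sig (boolp.cid (F i1))).
Qed.
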